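(* Let $p\neq q$ be primes and let $G$ be a finite minimal non-abelian group with $G=PQ$, where $P$ is a cyclic Sylow $p$-subgroup of $G$ and $Q$ is an elementary abelian Sylow $q$-subgroup of $G$ which is a minimal normal subgroup of $G$. Then $\omega(G)=|Q|+1$.
   Context: A minimal non-abelian group is a non-abelian group all of whose proper subgroups are abelian. A subset $X$ of a group $G$ is a set of pairwise non-commuting elements if $xy\neq yx$ for any two distinct $x,y\in X$. For a finite non-abelian group $G$, $\omega(G)$ denotes the maximum cardinality of a set of pairwise non-commuting elements of $G$. *)

(* Defs.v *)
From mathcomp Require Import all_boot all_fingroup all_solvable.
Set Implicit Arguments. Unset Strict Implicit. Unset Printing Implicit Defensive.
Local Open Scope group_scope.

Definition minimal_nonabelian (gT : finGroupType) (G : {group gT}) : Prop :=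
  ~~ abelian G /\ forall H : {group gT}, H \proper G -> abelian H.

Definition pairwise_noncommuting (gT : finGroupType) (X : {set gT}) : bool :=
  [forall x in X, forall y in X, (x != y) ==> (x * y != y * x)].

Definition omega (gT : finGroupType) (G : {set gT}) : nat :=
  \max_(X : {set gT} | (X \subset G) && pairwise_noncommuting X) #|X|.

(* Main.v *)
Require Import Defs.
From mathcomp Require Import all_boot all_fingroup all_solvable.
Local Open Scope group_scope.

Section Main.
Variables (gT : finGroupType) (G P Q : {group gT}).
Hypotheses (defG : G :=: P * Q) (abP : abelian P) (abQ : abelian Q)
  (nabG : ~~ abelian G) (minG : forall H : {group gT}, H \proper G -> abelian H)
  (mnQ : minnormal Q G).

Lemma sPG : P \subset G. Proof. by rewrite defG mulG_subl. Qed.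
Lemma sQG : Q \subset G. Proof. by rewrite defG mulG_subr. Qed.
Lemma nQG : G \subset 'N(Q). Proof. by case/mingroupP: mnQ => /andP[]. Qed.
Lemma ntQ : Q :!=: 1. Proof. by case/mingroupP: mnQ => /andP[]. Qed.

Lemma CQa a : a \in P -> a \notin 'C(Q) -> 'C_Q[a] = 1.
Proof.
move=> Pa nCa; apply/eqP; apply: contraR nCa => ntC.
case/mingroupP: mnQ => _ minQ.
have sCQ : 'C_Q[a] \subset Q by apply: subsetIl.
have -> : Q :=: 'C_Q[a]%G.
  apply/esym/minQ => //; rewrite ntC /=.
  rewrite defG mul_subG //.
    apply: normsI; first exact: subset_trans sPG nQG.
    apply: subset_trans (normG 'C[a]%G).
    by rewrite sub_cent1 (subsetP abP).
  by apply: cents_norm; rewrite (subset_trans abQ) // centS.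
by rewrite -sub_cent1 subsetIr.
Qed.
Lemma nsPC : ~~ (P \subset 'C(Q)).
Proof.
apply: contra nabG => sPC; rewrite defG abelianM abP abQ /=.
by rewrite centsC.
Qed.

Lemma abCG : abelian 'C_G(Q).
Proof.
apply: minG; rewrite properEneq subsetIl andbT.
apply: contra nsPC => /eqP eqC.
have : G \subset 'C(Q) by rewrite -eqC subsetIr.
by apply: subset_trans; exact: sPG.
Qed.

Lemma commQ a z : a \in P -> z \in Q -> [~ a, z] \in Q.
Proof.
move=> Pa Qz; rewrite commgEr groupM // memJ_norm ?groupV //.
by apply: (subsetP nQG); apply: (subsetP sPG).
Qed.

Lemma fixQ a c : a \in P -> a \notin 'C(Q) -> c \in Q -> a ^ c = a -> c = 1.
Proof.
move=> Pa nCa Qc fix_a.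
have : c \in 'C_Q[a].
  rewrite inE Qc /=; apply/cent1P.
  by rewrite /commute [RHS]conjgC fix_a.
by rewrite CQa // => /set1P.
Qed.

Lemma commQ_inj a : a \in P -> a \notin 'C(Q) -> {in Q &, injective (fun z => [~ a, z])}.
Proof.
move=> Pa nCa z w Qz Qw /=; rewrite !commgEl => /mulgI eqzw.
apply/eqP; rewrite eq_mulgV1; apply/eqP; apply: (@fixQ a _ Pa nCa); first by rewrite groupM ?groupV.
by rewrite conjgM eqzw conjgK.
Qed.
Lemma abc (A : {group gT}) b z : abelian A -> b \in A -> z \in A -> commute b z.
Proof.
move=> abA Ab Az; apply/cent1P.
by move: (subsetP abA z Az); rewrite -sub_cent1 => /subsetP; apply.
Qed.

Lemma cover g : g \in G -> g \notin 'C(Q) -> exists2 z, z \in Q & g ^ z \in P.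
Proof.
move=> Gg nCg; move: Gg; rewrite defG => /mulsgP[a b Pa Qb defg].
have nCa : a \notin 'C(Q).
  by apply: contra nCg => Ca; rewrite defg groupM // (subsetP abQ).
have imQ : [set [~ a, z] | z in Q] = Q.
  apply/eqP; rewrite eqEcard card_in_imset ?leqnn ?andbT; last exact: commQ_inj.
  by apply/subsetP => _ /imsetP[z Qz ->]; apply: commQ.
have : b^-1 \in [set [~ a, z] | z in Q] by rewrite imQ groupV.
case/imsetP => z Qz ebz; exists z => //.
have bz : b ^ z = b by rewrite conjgE (abc Q b z abQ Qb Qz) mulKg.
by rewrite defg conjMg bz -(mulVKg a (a ^ z)) -commgEl -ebz mulgVK.
Qed.
Lemma pw (X : {set gT}) g h : pairwise_noncommuting X -> g \in X -> h \in X ->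
  g * h = h * g -> g = h.
Proof.
move=> pX Xg Xh c.
move: pX => /forall_inP/(_ g Xg)/forall_inP/(_ h Xh)/implyP H.
by case: (eqVneq g h) => // /H; rewrite c eqxx.
Qed.

Lemma upper (X : {set gT}) : X \subset G -> pairwise_noncommuting X ->
  (#|X| <= #|Q| + 1)%N.
Proof.
move=> sXG pX.
pose f (g : gT) : option gT :=
  if g \in 'C(Q) then None else [pick z in Q | g ^ z \in P].
have fS g : g \in G -> g \notin 'C(Q) -> exists2 z, f g = Some z & (z \in Q) && (g ^ z \in P).
  move=> Gg nCg; rewrite /f (negPf nCg).
  case: pickP => [z Hz|H]; first by exists z.
  by case: (cover g Gg nCg) => z Qz Pz; move: (H z); rewrite Qz Pz.
have finj : {in X &, injective f}.
  move=> g h Xg Xh; have Gg := subsetP sXG g Xg; have Gh := subsetP sXG h Xh.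
  move=> efgh; apply: (pw X g h pX Xg Xh).
  case Cg: (g \in 'C(Q)); case Ch: (h \in 'C(Q)).
  - apply: (abc _ g h abCG); by rewrite inE ?Gg ?Gh ?Cg ?Ch.
  - case: (fS h Gh (negbT Ch)) => z fz _; by move: efgh; rewrite fz /f Cg.
  - case: (fS g Gg (negbT Cg)) => z fz _; by move: efgh; rewrite fz /f Ch.
  - case: (fS g Gg (negbT Cg)) => z fz /andP[_ Pgz].
    case: (fS h Gh (negbT Ch)) => w fw /andP[_ Phw].
    move: efgh; rewrite fz fw => -[ezw]; rewrite -ezw in Phw.
    apply: (@conjg_inj _ z); rewrite !conjMg.
    exact: (abc _ _ _ abP Pgz Phw).
rewrite -(card_in_imset finj).
have sub : f @: X \subset None |: [set Some z | z in Q].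
  apply/subsetP => _ /imsetP[g Xg ->].
  have Gg := subsetP sXG g Xg.
  case Cg: (g \in 'C(Q)); first by rewrite /f Cg setU11.
  case: (fS g Gg (negbT Cg)) => z -> /andP[Qz _].
  by rewrite setU1r // imset_f.
apply: (leq_trans (subset_leq_card sub)).
rewrite cardsU1 card_imset; last by move=> ? ? [].
by rewrite addnC leq_add2l; case: (None \notin _).
Qed.
Lemma cJ (x y g : gT) : x * y = y * x -> x ^ g * y ^ g = y ^ g * x ^ g.
Proof. by move=> c; rewrite -!conjMg c. Qed.

Lemma lower : exists X : {set gT},
  [/\ X \subset G, pairwise_noncommuting X & #|X| = (#|Q| + 1)%N].
Proof.
case/subsetPn: nsPC => a Pa nCa.
case/trivgPn: ntQ => y Qy nty.
have inQ c : c \in Q -> a ^ c = a -> c = 1 := fun Qc => @fixQ a c Pa nCa Qc.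
have K c : c \in Q -> a * a ^ c = a ^ c * a -> c = 1.
  move=> Qc com; apply: inQ => //.
  have Qk := commQ a c Pa Qc.
  have ak : a * [~ a, c] = [~ a, c] * a.
    have eac : a ^ c = a * [~ a, c] by rewrite commgEl mulVKg.
    rewrite eac in com; apply: (@mulgI _ a); rewrite com; exact: esym (mulgA _ _ _).
  have : [~ a, c] \in 'C_Q[a] by rewrite inE Qk; apply/cent1P.
  by rewrite CQa // => /set1P /eqP /conjg_fixP.
have K2 w : w \in Q -> y * a ^ w = a ^ w * y -> False.
  move=> Qw com; move: (cJ _ _ (w^-1) com); rewrite !conjgK.
  have -> : y ^ w^-1 = y by rewrite conjgE invgK (abc Q y (w^-1) abQ Qy (groupVr Qw)) mulVKg.
  move=> com2; have : y \in 'C_Q[a] by rewrite inE Qy; apply/cent1P.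
  by rewrite CQa // => /set1P; apply/eqP.
have injJ : {in Q &, injective (fun z => a ^ z)}.
  move=> z w Qz Qw /= ezw; apply/eqP; rewrite eq_mulgV1; apply/eqP.
  by apply: inQ; rewrite ?groupM ?groupV // conjgM ezw conjgK.
have nyim : y \notin [set a ^ z | z in Q].
  apply/imsetP => -[z Qz eyz].
  by move: nCa; rewrite (subsetP abQ) // -(groupJr a Qz) -eyz.
exists (y |: [set a ^ z | z in Q]); split.
- apply/subsetP => u /setU1P[-> | /imsetP[z Qz ->]]; first exact: (subsetP sQG).
  by apply: groupJ; [apply: (subsetP sPG) | apply: (subsetP sQG)].
- apply/forall_inP => u Xu; apply/forall_inP => v Xv; apply/implyP => nuv.
  apply/negP => /eqP com.
  case/setU1P: Xu => [eu | /imsetP[z Qz eu]]; case/setU1P: Xv => [ev | /imsetP[w Qw ev]].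
  + by rewrite eu ev eqxx in nuv.
  + by apply: (K2 w Qw); rewrite -eu -ev.
  + by apply: (K2 z Qz); rewrite -eu -ev.
  + move: (cJ _ _ (z^-1) com); rewrite eu ev conjgK -conjgM => /K.
    rewrite groupM ?groupV // => /(_ isT) /eqP; rewrite -eq_mulgV1 => /eqP ewz.
    by rewrite eu ev ewz eqxx in nuv.
- by rewrite cardsU1 nyim card_in_imset // addnC.
Qed.
End Main.

Theorem theorem2p5 (gT : finGroupType) (G P Q : {group gT}) (p q : nat) :
  prime p -> prime q -> p != q ->
  minimal_nonabelian G ->
  G :=: P * Q ->
  P \in 'Syl_p(G) -> cyclic P ->
  Q \in 'Syl_q(G) -> q.-abelem Q -> minnormal Q G ->
  omega G = (#|Q| + 1)%N.
Proof.
move=> _ _ _ [nabG minG] defG _ cycP _ abelQ mnQ.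
have abP := cyclic_abelian cycP; have abQ := abelem_abelian abelQ.
apply/eqP; rewrite eqn_leq; apply/andP; split.
  apply/bigmax_leqP => X /andP[sXG pX].
  exact: (upper _ _ _ _ defG abP abQ nabG minG mnQ X sXG pX).
have [X [sXG pX cX]] := lower _ _ _ _ defG abP abQ nabG mnQ.
rewrite -cX /omega; apply: leq_bigmax_cond.
by rewrite sXG pX.
Qed.
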